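(* For every $n\ge1$, the map $e\mapsto d(e)$ is a bijection from $\mathbf{I}_n(021)$ onto $\mathcal{A}_n$, and for every $e\in\mathbf{I}_n(021)$, $$(\mathrm{dist},\mathrm{asc},\mathrm{zero},\mathrm{ema})(e)=(\mathrm{turn},\mathrm{segment},\mathrm{red},\mathrm{return})(d(e)).$$
   Context: $\mathbf{I}_n=\{(e_1,\dots,e_n): 0\le e_i\le i-1\}$; $\mathbf I_n(021)$ is the set of $e\in\mathbf I_n$ containing no indices $i<j<k$ with $e_i<e_k<e_j$ (equivalently, whose positive entries are weakly increasing). For $e\in\mathbf I_n$: $\mathrm{dist}(e)$ is the number of distinct positive values among the entries; $\mathrm{asc}(e)=|\{i\in[n-1]:e_i<e_{i+1}\}|$; $\mathrm{zero}(e)=|\{i:e_i=0\}|$; $\mathrm{ema}(e)=|\{i:e_i=i-1\}|$. A two-colored Dyck path of length $n$ is a lattice path from $(0,0)$ to $(n,n)$ with unit east and north steps never going above $y=x$, each east step colored black or red; it is encoded by $D=d_1\cdots d_n$ where $d_i$ (the height of the $i$-th east step) is the number of north steps before it, so $0\le d_1\le\dots\le d_n$, $d_i\le i-1$, together with the colors. The outline of $e\in\mathbf I_n(021)$ is the two-colored Dyck path $d(e)$ with $d_i=e_i$ and step $i$ black if $e_i\ne0$, and $d_i=\max\{e_1,\dots,e_i\}$ and step $i$ red if $e_i=0$. $\mathcal{A}_n$ is the set of two-colored Dyck paths of length $n$ such that (c-1) all east steps of height $0$ are red and (c-2) the first east step of each positive height is black. For a two-colored Dyck path $D$: $\mathrm{turn}(D)$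 is the number of east steps immediately followed by a north step, minus $1$ (equivalently $|\{i\in[n-1]: d_i<d_{i+1}\}|$); $\mathrm{segment}(D)$ is the number of maximal runs of consecutive east steps (consecutive indices) that are all black and have the same height; $\mathrm{red}(D)$ is the number of red east steps; $\mathrm{return}(D)$ is the number of lattice points $(i,i)$, $1\le i\le n$, on $D$ (equivalently $|\{i\in[n]:d_i=i-1\}|$). *)

(* Defs.v *)
(* All sequences are 0-indexed: entry e_i of the paper (1-indexed)
   is [nth 0 e (i-1)]. *)
From mathcomp Require Import all_boot.
Set Implicit Arguments. Unset Strict Implicit. Unset Printing Implicit Defensive.

Definition invseq (n : nat) (e : seq nat) : bool :=
  (size e == n) && [forall i : 'I_n, nth 0 e i <= i].

Definition avoids021 (e : seq nat) : bool :=
  ~~ [exists i : 'I_(size e), exists j : 'I_(size e), exists k : 'I_(size e),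
       [&& i < j, j < k, nth 0 e i < nth 0 e k & nth 0 e k < nth 0 e j]].

Definition dist (e : seq nat) : nat := size (undup [seq x <- e | 0 < x]).
Definition asc (e : seq nat) : nat :=
  count (fun i => nth 0 e i < nth 0 e i.+1) (iota 0 (size e).-1).
Definition zero (e : seq nat) : nat := count (fun x => x == 0) e.
Definition ema (e : seq nat) : nat :=
  count (fun i => nth 0 e i == i) (iota 0 (size e)).

(* A two-colored Dyck path of length n is a seq of east steps (height, black?):
   heights d_1 <= ... <= d_n with d_i <= i-1 (1-indexed); [true] = black, [false] = red. *)
Definition step := (nat * bool)%type.
Definition ht (D : seq step) (i : nat) : nat := (nth (0, false) D i).1.
Definition black (D : seq step) (i : nat) : bool := (nth (0, false) D i).2.

Definition cdyck (n : nat) (D : seq step) : bool :=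
  [&& size D == n,
      [forall i : 'I_n, ht D i <= i] &
      sorted leq [seq s.1 | s <- D]].

(* A_n : (c-1) all east steps at height 0 are red,
         (c-2) the first east step of each positive height is black *)
Definition inA (n : nat) (D : seq step) : bool :=
  [&& cdyck n D,
      [forall i : 'I_n, (ht D i == 0) ==> ~~ black D i] &
      [forall i : 'I_n, [&& 0 < ht D i & (i == 0 :> nat) || (ht D i.-1 != ht D i)]
                          ==> black D i]].

Definition turn (D : seq step) : nat :=
  count (fun i => ht D i < ht D i.+1) (iota 0 (size D).-1).
(* number of maximal runs of consecutive black steps of the same height
   = number of black steps i that do not continue a run started at i-1 *)
Definition segment (D : seq step) : nat :=
  count (fun i => black D i &&
           ((i == 0) || ~~ black D i.-1 || (ht D i.-1 != ht D i)))
        (iota 0 (size D)).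
Definition red (D : seq step) : nat := count (fun s : step => ~~ s.2) D.
Definition return_ (D : seq step) : nat :=
  count (fun i => ht D i == i) (iota 0 (size D)).

Definition prefmax (e : seq nat) (i : nat) : nat := foldr maxn 0 (take i.+1 e).
Definition outline (e : seq nat) : seq step :=
  [seq (if nth 0 e i != 0 then (nth 0 e i, true) else (prefmax e i, false))
   | i <- iota 0 (size e)].

(* Main.v *)
Require Import Defs.
From mathcomp Require Import all_boot.
Set Implicit Arguments. Unset Strict Implicit. Unset Printing Implicit Defensive.

Lemma fmax_ge s x : x \in s -> x <= foldr maxn 0 s.
Proof.
elim: s => //= a s IH; rewrite in_cons => /orP [/eqP ->|/IH H]; first exact: leq_maxl.
exact: (leq_trans H (leq_maxr _ _)).
Qed.

Lemma fmax_le s m : (forall x, x \in s -> x <= m) -> foldr maxn 0 s <= m.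
Proof.
elim: s => //= a s IH H; rewrite geq_max H ?mem_head //=.
by apply: IH => x hx; apply: H; rewrite in_cons hx orbT.
Qed.

Lemma fmax_in s : foldr maxn 0 s = 0 \/ foldr maxn 0 s \in s.
Proof.
elim: s => [|a s IH] /=; first by left.
have H : maxn a (foldr maxn 0 s) = a \/ maxn a (foldr maxn 0 s) = foldr maxn 0 s.
  by case: (leqP a (foldr maxn 0 s)); [right|left].
case: H => ->.
- by right; rewrite mem_head.
- case: IH => [->|H]; first by left.
  by right; rewrite in_cons H orbT.
Qed.

Lemma mem_takeP (e : seq nat) i x :
  reflect (exists j, [/\ j <= i, j < size e & nth 0 e j = x]) (x \in take i.+1 e).
Proof.
apply: (iffP (nthP 0)).
- move=> [j hj <-]; move: (hj); rewrite size_take_min leq_min => /andP [h1 h2].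
  by exists j; rewrite nth_take.
- move=> [j [hji hjs <-]]; exists j; last by rewrite nth_take.
  by rewrite size_take_min leq_min hjs andbT.
Qed.

Lemma pm_ge e i j : j <= i -> j < size e -> nth 0 e j <= prefmax e i.
Proof. by move=> h1 h2; apply: fmax_ge; apply/mem_takeP; exists j. Qed.

Lemma pm_le e i m : (forall j, j <= i -> j < size e -> nth 0 e j <= m) -> prefmax e i <= m.
Proof. by move=> H; apply: fmax_le => x /mem_takeP [j [h1 h2 <-]]; apply: H. Qed.

Lemma pm_in e i : prefmax e i = 0 \/ exists j, [/\ j <= i, j < size e & nth 0 e j = prefmax e i].
Proof.
case: (fmax_in (take i.+1 e)) => [h|/mem_takeP h]; [by left|by right].
Qed.

Lemma pm_mono e : {homo prefmax e : i j / i <= j}.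
Proof.
move=> i j hij; apply: pm_le => k hk hks; apply: pm_ge => //; exact: leq_trans hk hij.
Qed.

Lemma pm_bound e i : (forall j, nth 0 e j <= j) -> prefmax e i <= i.
Proof. by move=> H; apply: pm_le => j hj _; exact: leq_trans (H j) hj. Qed.

Lemma size_outline e : size (outline e) = size e.
Proof. by rewrite size_map size_iota. Qed.

Lemma nth_outline e i : i < size e -> nth (0,false) (outline e) i =
  (if nth 0 e i != 0 then (nth 0 e i, true) else (prefmax e i, false)).
Proof. by move=> h; rewrite (nth_map 0) ?size_iota // nth_iota. Qed.

Lemma black_outline e i : i < size e -> black (outline e) i = (nth 0 e i != 0).
Proof. by move=> h; rewrite /black nth_outline //; case: ifP. Qed.

Lemma recover e i : i < size e ->
  nth 0 e i = (if black (outline e) i then ht (outline e) i else 0).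
Proof.
move=> h; rewrite /black /ht nth_outline //; by case: eqP.
Qed.

Definition good n e := [/\ size e = n, forall j, nth 0 e j <= j &
   forall j k, j < k -> k < n -> 0 < nth 0 e k -> nth 0 e j <= nth 0 e k].

Lemma goodP n e : invseq n e -> avoids021 e -> good n e.
Proof.
move=> /andP [/eqP hs /forallP hb] ha.
have Hb : forall j, nth 0 e j <= j.
  move=> j; case: (ltnP j n) => hj; first exact: (hb (Ordinal hj)).
  by rewrite nth_default // hs.
split=> // j k hjk hk hpos; rewrite leqNgt; apply/negP => hlt.
move/negP: ha; apply; rewrite hs.
have h0 : 0 < n by exact: leq_ltn_trans (leq0n _) hk.
have hj : j < n by exact: ltn_trans hjk hk.
apply/existsP; exists (Ordinal h0); apply/existsP; exists (Ordinal hj);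
  apply/existsP; exists (Ordinal hk) => /=.
have e0 : nth 0 e 0 = 0 by apply/eqP; rewrite -leqn0; exact: Hb.
rewrite hjk hlt e0 hpos !andbT /=.
case: j hjk hlt hj => // hjk; rewrite e0 ltn0 //.
Qed.


Section G.
Variables (n : nat) (e : seq nat) (G : good n e).

Lemma pm_pos i : i < n -> 0 < nth 0 e i -> prefmax e i = nth 0 e i.
Proof.
case: G => hs hb hm hi hp; apply/eqP; rewrite eqn_leq pm_ge ?hs // andbT.
apply: pm_le => j hj _; case: (ltngtP j i) hj => // [hji _|-> _]; last by [].
exact: hm.
Qed.

Lemma ht_out i : i < n -> ht (outline e) i = prefmax e i.
Proof.
case: G => hs _ _ hi; rewrite /ht nth_outline ?hs //; case: eqP => //= h.
by rewrite pm_pos //; rewrite lt0n; apply/eqP.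
Qed.

Lemma heights : [seq s.1 | s <- outline e] = map (prefmax e) (iota 0 n).
Proof.
case: G => hs _ _; rewrite /outline -map_comp hs; apply/eq_in_map => i.
rewrite mem_iota add0n /= => hi; move: (ht_out hi); rewrite /ht nth_outline ?hs //.
Qed.

Lemma pm0 : prefmax e 0 = 0.
Proof. by case: G => _ hb _; apply/eqP; rewrite -leqn0; apply: pm_bound. Qed.

Lemma part1 : inA n (outline e).
Proof.
case: G => hs hb hm.
apply/and3P; split.
- apply/and3P; split; first by rewrite size_outline hs.
  + by apply/forallP => i; rewrite ht_out // pm_bound.
  + rewrite heights; apply: (homo_sorted (@pm_mono e)); exact: iota_sorted.
- apply/forallP => i; rewrite /ht /black nth_outline ?hs //.
  case: ifP => h /=; last by rewrite implybT.
  by apply/implyP => /eqP E; rewrite E eqxx in h.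
- apply/forallP => i; apply/implyP => /andP [hp hor].
  rewrite black_outline ?hs //; apply/eqP => h0.
  move: hp hor; rewrite ht_out // => hp hor.
  case: (pm_in e i) => [h|[j [hji hjs hj]]]; first by rewrite h in hp.
  have hji' : j < i.
    rewrite ltn_neqAle hji andbT; apply/eqP => E; subst j.
    by rewrite h0 in hj; rewrite -hj in hp.
  have hi0 : (i:nat) != 0 by rewrite -lt0n; exact: leq_ltn_trans (leq0n j) hji'.
  move: hor; rewrite (negbTE hi0) /= ht_out; last first.
    exact: leq_ltn_trans (leq_pred _) (ltn_ord i).
  apply/negP; rewrite negbK eqn_leq pm_mono ?leq_pred //=.
  rewrite -hj; apply: pm_ge => //; rewrite -ltnS prednK //; by rewrite lt0n.
Qed.

End G.


Lemma inj_part e1 e2 : size e1 = size e2 -> outline e1 = outline e2 -> e1 = e2.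
Proof.
move=> hs ho; apply: (@eq_from_nth _ 0) => // i hi.
by rewrite recover // (recover (e := e2)) -?hs // ho.
Qed.

Lemma zero_red e : zero e = red (outline e).
Proof.
rewrite /zero /red /outline -{1}(mkseq_nth 0 e) /mkseq !count_map.
by apply: eq_count => i /=; case: eqP.
Qed.

Section G.
Variables (n : nat) (e : seq nat) (G : good n e).

Lemma ema_ret : ema e = return_ (outline e).
Proof.
case: G => hs hb hm.
rewrite /ema /return_ size_outline; apply: eq_in_count => i; rewrite mem_iota add0n /= => hi.
rewrite (ht_out G) -?hs //.
case: i hi => [|i] hi.
  by rewrite (pm0 G) eqxx -leqn0 hb.
apply/eqP/eqP => E.
  by rewrite (pm_pos G) -?hs // E.
case: (pm_in e i.+1) => [h|[j [hji hjs hj]]]; first by rewrite h in E.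
have : j = i.+1 by apply/eqP; rewrite eqn_leq hji /= -E -hj hb.
by move=> ?; subst j; rewrite hj.
Qed.

Lemma asc_seg : 1 <= n -> asc e = segment (outline e).
Proof.
move=> hn; have [m hN] : exists m, n = m.+1 by exists n.-1; rewrite prednK.
case: G => hs hb hm.
rewrite /asc /segment size_outline hs hN /=.
have e0 : nth 0 e 0 = 0 by apply/eqP; rewrite -leqn0 hb.
rewrite black_outline ?hs ?hN // e0 /=.
rewrite -(add0n 1) iotaDl -iotaDl add0n.
rewrite (iotaDl 1) count_map; apply: eq_in_count => i; rewrite mem_iota add0n /= => hi.
have hi1 : i.+1 < n by rewrite hN.
have hi2 : i < n by rewrite hN; exact: ltnW.
rewrite /preim /= !black_outline ?hs // add1n /=.
rewrite !add0n; case: (posnP (nth 0 e i.+1)) => ha; first by rewrite ha ltn0.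
rewrite /= (ht_out G hi2) (ht_out G hi1) (pm_pos G hi1) //.
case: (posnP (nth 0 e i)) => hb0 /=; first by rewrite hb0.
by rewrite (pm_pos G hi2) // ltn_neqAle (hm i i.+1) ?andbT.
Qed.

End G.


Lemma undup_sorted s : sorted leq s -> s != [::] ->
  size (undup s) = (count (fun i => nth 0 s i < nth 0 s i.+1) (iota 0 (size s).-1)).+1.
Proof.
elim: s => // x [|y s] IH hs _; first by [].
have hs' : sorted leq (y :: s) := path_sorted hs.
have /andP [hxy hp] : (x <= y) && path leq y s := hs.
have hmem : (x \in y :: s) = (x == y).
  rewrite in_cons; case: eqP => //= hne; apply/negP => hx.
  have := order_path_min leq_trans hp; move/allP/(_ _ hx) => hyx.
  by apply: hne; apply/eqP; rewrite eqn_leq hxy hyx.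
have U : undup (x :: y :: s) = if x \in y :: s then undup (y :: s) else x :: undup (y :: s) by [].
have C : count (fun i => nth 0 [:: x, y & s] i < nth 0 [:: x, y & s] i.+1) (iota 0 (size [:: x, y & s]).-1)
   = (x < y) + count (fun i => nth 0 (y :: s) i < nth 0 (y :: s) i.+1) (iota 0 (size (y :: s)).-1).
  rewrite [size _]/= [(size s).+2.-1]/= [iota 0 _]/= (iotaDl 1 0) [count _ (_ :: _)]/= count_map.
  by [].
rewrite U hmem C; case: eqP => [E|/eqP hne].
  by subst y; rewrite ltnn add0n IH.
by rewrite [size (x :: _)]/= IH // ltn_neqAle hne hxy.
Qed.

Lemma size_undup_eqi (s1 s2 : seq nat) : s1 =i s2 -> size (undup s1) = size (undup s2).
Proof.
move=> h; apply: perm_size; apply: uniq_perm; rewrite ?undup_uniq // => x.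
by rewrite !mem_undup h.
Qed.

Section G.
Variables (n : nat) (e : seq nat) (G : good n e).

Lemma dist_turn : 1 <= n -> dist e = turn (outline e).
Proof.
move=> hn; case: G => hs hb hm.
set H := map (prefmax e) (iota 0 n).
have Hsort : sorted leq H by apply: (homo_sorted (@pm_mono e)); exact: iota_sorted.
have Hsz : size H = n by rewrite size_map size_iota.
have Hne : H != [::] by rewrite -size_eq0 Hsz -lt0n.
have T : turn (outline e) = count (fun i => nth 0 H i < nth 0 H i.+1) (iota 0 (size H).-1).
  rewrite /turn size_outline hs Hsz; apply: eq_in_count => i; rewrite mem_iota add0n /= => hi.
  have hi1 : i.+1 < n by rewrite -(prednK hn) ltnS.
  have hi2 : i < n by exact: ltnW.
  by rewrite !(ht_out G) // !(nth_map 0) ?size_iota // !nth_iota.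
have D1 : size (undup H) = size (undup (0 :: [seq x <- e | 0 < x])).
  apply: size_undup_eqi => x; rewrite in_cons mem_filter.
  apply/mapP/idP.
  - move=> [i]; rewrite mem_iota add0n /= => hi ->.
    case: (pm_in e i) => [->|[j [hji hjs hj]]]; first by rewrite eqxx.
    rewrite -hj; case: (posnP (nth 0 e j)) => [//|hp] /=.
    by rewrite mem_nth.
  - case/orP => [/eqP ->|/andP [hp /(nthP 0) [i hi hx]]].
      by exists 0; [rewrite mem_iota | rewrite (pm0 G)].
    exists i; first by rewrite mem_iota add0n -hs.
    by rewrite (pm_pos G) ?hx // -?hs.
have D2 : size (undup (0 :: [seq x <- e | 0 < x])) = (dist e).+1.
  by rewrite /= mem_filter ltnn.
apply: succn_inj; rewrite -D2 -D1 T; exact: undup_sorted.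
Qed.

End G.


Lemma surj_part n D : inA n D -> exists e, [/\ invseq n e, avoids021 e & outline e = D].
Proof.
case/and3P => /and3P [/eqP hs /forallP hh hsort] /forallP c1 /forallP c2.
set e := [seq (if s.2 then s.1 else 0) | s <- D].
have hse : size e = n by rewrite size_map.
have ne : forall i, i < n -> nth 0 e i = if black D i then ht D i else 0.
  by move=> i hi; rewrite /e (nth_map (0,false)) ?hs.
have HH : forall i, i < n -> ht D i <= i by move=> i hi; exact: (hh (Ordinal hi)).
have mono : forall j k, j <= k -> k < n -> ht D j <= ht D k.
  move=> j k hjk hk.
  have := sorted_leq_nth leq_trans leqnn 0 hsort.
  move=> /(_ j k); rewrite !inE size_map hs => /(_ (leq_ltn_trans hjk hk) hk hjk).
  by rewrite !(nth_map (0,false)) ?hs //; exact: leq_ltn_trans hjk hk.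
have C1 : forall i, i < n -> black D i -> 0 < ht D i.
  move=> i hi hb; rewrite lt0n; apply/negP => h0.
  by have := c1 (Ordinal hi); rewrite /= h0 hb.
have C2 : forall i, i < n -> 0 < ht D i -> (i == 0) || (ht D i.-1 != ht D i) -> black D i.
  by move=> i hi h1 h2; have := c2 (Ordinal hi); rewrite /= h1 h2.
exists e; split.
- apply/andP; split; first by rewrite hse.
  apply/forallP => i; rewrite ne ?ltn_ord //; case: ifP => // _; exact: HH.
- apply/negP => /existsP [i /existsP [j /existsP [k /and4P [hij hjk hik hkj]]]].
  have hk : k < n by rewrite -hse.
  have hj : j < n by rewrite -hse.
  have hi : i < n by rewrite -hse.
  move: hik hkj; rewrite !ne //.
  case: (black D k) => /=; last by rewrite ltn0.
  move=> _; case: (black D j) => /=; last by rewrite ltn0.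
  by rewrite ltnNge mono // ltnW.
- apply: (@eq_from_nth step (0,false)); first by rewrite size_outline hse hs.
  move=> i; rewrite size_outline hse => hi.
  rewrite nth_outline ?hse // ne //.
  have -> : nth (0, false) D i = (ht D i, black D i) by rewrite /ht /black; case: (nth _ D i).
  case hbi : (black D i).
    by rewrite -lt0n C1.
  rewrite eqxx /=; congr (_, _); apply/eqP; rewrite eqn_leq; apply/andP; split.
    apply: pm_le => j hji hjs; rewrite ne -?hse //.
    case: ifP => // _; exact: mono.
  case: (posnP (ht D i)) => [->//|hp].
  pose P := fun j => ht D j == ht D i.
  have exP : exists j, P j by exists i; rewrite /P.
  case: (ex_minnP exP) => j /eqP hPj hmin.
  have hji : j <= i by apply: hmin; rewrite /P.
  have hjn : j < n by exact: leq_ltn_trans hji hi.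
  have bj : black D j.
    apply: C2 => //; first by rewrite hPj.
    case: j hPj hmin hji hjn => // j hPj hmin hji hjn /=.
    rewrite hPj; apply/negP => /eqP E.
    by have := hmin j; rewrite /P E eqxx ltnn => /(_ isT).
  have nej : nth 0 e j = ht D j by rewrite ne // bj.
  by rewrite -hPj -nej; apply: pm_ge; rewrite ?hse.
Qed.

Theorem lemma4p2 (n : nat) (hn : 1 <= n) :
  (* d maps I_n(021) into A_n *)
  (forall e, invseq n e -> avoids021 e -> inA n (outline e)) /\
  (* injective on I_n(021) *)
  (forall e1 e2, invseq n e1 -> avoids021 e1 -> invseq n e2 -> avoids021 e2 ->
     outline e1 = outline e2 -> e1 = e2) /\
  (* surjective onto A_n *)
  (forall D, inA n D -> exists e, [/\ invseq n e, avoids021 e & outline e = D]) /\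
  (* statistics *)
  (forall e, invseq n e -> avoids021 e ->
     (dist e, asc e, zero e, ema e) =
     (turn (outline e), segment (outline e), red (outline e), return_ (outline e))).
Proof.
split; first by move=> e h1 h2; exact: part1 (goodP h1 h2).
split.
  move=> e1 e2 h1 h2 h3 h4; apply: inj_part.
  by case: (goodP h1 h2) => -> _ _; case: (goodP h3 h4) => -> _ _.
split; first exact: surj_part.
move=> e h1 h2; have G := goodP h1 h2.
by rewrite (dist_turn G hn) (asc_seg G hn) zero_red (ema_ret G).
Qed.
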